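(* Let $I=(a_1,\dots,a_n)\in(0,1]^n$ be a sorted item sequence, and let $f$ be the assignment produced by $MM_2$ on $I$ (items indexed by their position in $I$). Suppose $f$ has at least one bin containing a sole class-1 item, and let $p$ be the maximum index of such sole class-1 items in $f$. Let $U$ be the set of indices of items (other than $1,\dots,p$) that share a bin with one of the items $1,2,\dots,p$ in $f$ (possibly $U=\emptyset$). Then for any assignment $g$ of $I$ without cardinality constraints, letting $W$ be the set of indices of items (other than $1,\dots,p$) that share a bin with one of the items $1,2,\dots,p$ in $g$, we have $W\subseteq U$.
   Context: An item sequence $I=(a_1,\dots,a_n)\in(0,1]^n$ is sorted if $a_1\ge\cdots\ge a_n$. An assignment without cardinality constraints is a map $g:\{1,\dots,n\}\to\mathbb{N}$ with $\sum_{i:g(i)=j}a_i\le1$ for each bin $j$. A class-1 item is an item of size in $(\frac12,1]$; an item is sole if its bin contains no other item. Algorithm $MM_k$ ($k$-cardinality constrained version of $MM$): sort the items in non-increasing order (on an already sorted input this leaves the order, hence the indices, unchanged); keep a single open bin with load $S$. Repeat while items remain: if the open bin already contains $k$ items, close it and open a new bin; else if the head (largest remaining) item fits ($S+\text{head}\le1$) pack it; else if the tail (smallest remaining) item fits pack it; else close the open bin permanently and open a new empty bin. $MM_2$ is the case $k=2$. *)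

(* Defs.v *)
From HB Require Import structures.
From mathcomp Require Import all_boot all_order all_algebra.
Set Implicit Arguments. Unset Strict Implicit. Unset Printing Implicit Defensive.
Import Order.TTheory GRing.Theory Num.Theory.
Local Open Scope ring_scope.

(* Items are indexed 0 .. n-1 (position in the sequence s); bins are nats. *)

Section MM.
Variable R : realFieldType.

Definition item (s : seq R) (i : nat) : R := nth 0 s i.

Definition valid_items (s : seq R) : bool := all (fun x => (0 < x) && (x <= 1)) s.

Definition sorted_items (s : seq R) : bool := sorted (fun x y => y <= x) s.

Definition is_assignment (s : seq R) (g : nat -> nat) : Prop :=
  forall j : nat, \sum_(i < size s | g i == j) item s i <= 1.

Definition upd (f : nat -> nat) (i b : nat) : nat -> nat :=
  fun x => if x == i then b else f x.

(* One run of MM_k on an already sorted input (sorting leaves indices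
   unchanged).  Remaining items are the indices lo .. hi-1 (head = lo,
   tail = hi-1); b = current open bin, c = number of items in it,
   S = its load. *)
Fixpoint mm_run (k : nat) (s : seq R) (fuel lo hi b c : nat) (S : R)
    (f : nat -> nat) : nat -> nat :=
  match fuel with
  | 0%N => f
  | fuel'.+1 =>
    if (hi <= lo)%N then f
    else if c == k then mm_run k s fuel' lo hi b.+1 0 0 f
    else if S + item s lo <= 1 then
      mm_run k s fuel' lo.+1 hi b c.+1 (S + item s lo) (upd f lo b)
    else if S + item s hi.-1 <= 1 then
      mm_run k s fuel' lo hi.-1 b c.+1 (S + item s hi.-1) (upd f hi.-1 b)
    else mm_run k s fuel' lo hi b.+1 0 0 f
  end.

(* Assignment produced by MM_k.  Fuel 2n+1 suffices for k >= 1 since every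
   step packs an item or closes a nonempty bin. *)
Definition MM (k : nat) (s : seq R) : nat -> nat :=
  mm_run k s (2 * size s).+1 0 (size s) 0 0 0 (fun _ => 0%N).

Definition class1 (s : seq R) (i : nat) : bool := 1 / 2 < item s i.

Definition sole (s : seq R) (f : nat -> nat) (i : nat) : Prop :=
  forall i', (i' < size s)%N -> i' <> i -> f i' <> f i.

Definition partners (s : seq R) (f : nat -> nat) (p u : nat) : Prop :=
  (p < u < size s)%N /\ exists i, (i <= p)%N /\ f u = f i.

End MM.

(* Main.v *)
Require Import Defs.
From HB Require Import structures.
From mathcomp Require Import all_boot all_order all_algebra.
From mathcomp Require Import zify.
Import Order.TTheory GRing.Theory Num.Theory.
Local Open Scope ring_scope.

Section Proof.
Variable R : realFieldType.
Variable s : seq R.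
Hypothesis Hval : valid_items s.
Hypothesis Hsort : sorted_items s.

Lemma item_bounds i : (i < size s)%N -> 0 < item s i /\ item s i <= 1.
Proof.
move=> hi; move/all_nthP: Hval => /(_ 0 i hi) /andP[]; rewrite /item; by split.
Qed.

Lemma item_mono i j : (i <= j)%N -> (j < size s)%N -> item s j <= item s i.
Proof.
move=> hij hj; rewrite /item.
have := @sorted_leq_nth R (fun x y => y <= x) _ _ 0 s Hsort i j.
apply; rewrite ?inE; try lia.
- by move=> x y z hyx hzy; apply: le_trans hzy hyx.
- by move=> x.
Qed.

Lemma mm_frame k fuel lo hi b c S f x :
  (x < lo)%N || (hi <= x)%N -> mm_run k s fuel lo hi b c S f x = f x.
Proof.
elim: fuel lo hi b c S f => [|fuel IH] lo hi b c S f hx //=.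
case: ifP => hhl //; move/negbT: hhl => hhl.
case: ifP => _; first by rewrite IH.
case: ifP => _.
  rewrite IH; last by lia.
  by rewrite /upd; case: eqP => [hxe|//]; lia.
case: ifP => _; last by rewrite IH.
rewrite IH; last by lia.
by rewrite /upd; case: eqP => [hxe|//]; lia.
Qed.

Variables p w : nat.
Hypothesis Hpw : (p < w)%N.
Hypothesis Hwn : (w < size s)%N.
Hypothesis Hsum : item s p + item s w <= 1.

Lemma s3 fuel hi b f : (0 < fuel)%N -> (w < hi)%N -> (hi <= size s)%N -> f p = b ->
  ~ sole s (mm_run 2 s fuel p.+1 hi b 1 (item s p) f) p.
Proof.
case: fuel => [//|fuel] _ hw hn hfp hsole /=.
move: hsole => /=.
have -> : (hi <= p.+1)%N = false by lia.
rewrite /=.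
case: ifP => _.
  move=> hs; apply: (hs p.+1); try lia.
  rewrite !mm_frame; try lia.
  by rewrite /upd eqxx; case: eqP => [|_]; [lia|].
case: ifP => [_|hno].
  move=> hs; apply: (hs hi.-1); try lia.
  rewrite !mm_frame; try lia.
  by rewrite /upd eqxx; case: eqP => [|_]; [lia|].
exfalso; move/negbT: hno; rewrite -ltNge => hno.
have hle : item s hi.-1 <= item s w by apply: item_mono; lia.
have : item s p + item s hi.-1 <= 1 by apply: le_trans Hsum; rewrite lerD2l.
by rewrite leNgt hno.
Qed.

Lemma main fuel : forall lo hi b c S f,
  (lo <= p)%N -> (w < hi)%N -> (hi <= size s)%N -> (c <= 2)%N ->
  (c = 0%N -> S = 0) -> (c = 1%N -> exists j, (j < lo)%N /\ f j = b) ->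
  (2 * (hi - lo) + (c != 0%N) <= fuel)%N ->
  ~ sole s (mm_run 2 s fuel lo hi b c S f) p \/
  exists i, (i <= p)%N /\ mm_run 2 s fuel lo hi b c S f w = mm_run 2 s fuel lo hi b c S f i.
Proof.
elim: fuel => [|fuel IH] lo hi b c S f hlo hw hn hc hS hj hpot; first by lia.
rewrite /=.
have -> : (hi <= lo)%N = false by lia.
case: ifP => [/eqP hc2|hc2].
  apply: IH => //; lia.
have hlon : (lo < size s)%N by lia.
case: ifP => hhead.
  have [hlt|heq] : (lo < p)%N \/ lo = p by lia.
    apply: IH => //; try lia.
    by move=> h; exists lo; split; [lia| rewrite /upd eqxx].
  subst lo.
  have [hc0|hc1] : c = 0%N \/ c = 1%N by move/negbT: hc2; lia.
    subst c; rewrite hS // add0r; left; apply: s3 => //; first lia.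
    by rewrite /upd eqxx.
  have [j [hjl hjb]] := hj hc1.
  left=> hs; apply: (hs j); try lia.
  rewrite !mm_frame; try lia.
  rewrite /upd eqxx; case: eqP => [|_]; [lia|done].
have hc0 : c <> 0%N.
  move=> hc0; move: hhead; rewrite hS // add0r.
  by have [_ ->] := item_bounds _ hlon.
have hc1 : c = 1%N by move/negbT: hc2; lia.
have [j [hjl hjb]] := hj hc1.
case: ifP => htail.
  have [hweq|hwlt] : w = hi.-1 \/ (w < hi.-1)%N by lia.
    right; exists j; split; first lia.
    rewrite !mm_frame; try lia.
    rewrite /upd -hweq eqxx; case: eqP => [|_]; [lia|done].
  apply: IH => //; try lia.
apply: IH => //; lia.
Qed.

End Proof.

Theorem lemma1 (R : realFieldType) (s : seq R) (p : nat) :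
  valid_items s -> sorted_items s ->
  (* p is the maximum index of a sole class-1 item of f = MM_2(s) *)
  (p < size s)%N -> class1 s p -> sole s (MM 2 s) p ->
  (forall i, (i < size s)%N -> class1 s i -> sole s (MM 2 s) i -> (i <= p)%N) ->
  forall g : nat -> nat, is_assignment s g ->
  forall w, partners s g p w -> partners s (MM 2 s) p w.
Proof.
move=> hv hs hp _ hsole _ g hg w [hpw [i [hip hgi]]].
have hwn : (w < size s)%N by lia.
have hin : (i < size s)%N by lia.
have hsum : item s i + item s w <= 1.
  have := hg (g w).
  rewrite (bigD1 (Ordinal hwn)) /= ?eqxx //.
  rewrite (bigD1 (Ordinal hin)) /=; last first.
    by rewrite hgi eqxx /=; apply/eqP => /(congr1 val) /=; lia.
  move=> h; apply: le_trans h.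
  rewrite addrA [item s i + _]addrC lerDl.
  apply: sumr_ge0 => k _; have [+ _] := @item_bounds R s hv _ (ltn_ord k).
  exact: ltW.
have hsum' : item s p + item s w <= 1.
  apply: le_trans hsum; rewrite lerD2r; exact: item_mono.
split; first lia.
have := @main R s hv hs p w ltac:(lia) hwn hsum' (2 * size s).+1 0 (size s) 0 0 0 (fun _ => 0%N).
case=> //; try lia.
Qed.
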